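(* For all graphs $F$ and $G$ with $F\to G$, \[ \mathsf{HDE}(F,G) \;\le\; \min_{q \in \mathcal Q(G)}\; \max_{\varphi \in \mathsf{Hom}(F,G)}\; \sum_{A\subseteq V_G} q(A)\cdot \mathsf{CC}\big(F|_{\varphi^{-1}(A)}\big). \]
   Context: Graphs are finite directed graphs $G=(V_G,E_G)$ with $V_G$ nonempty finite and $E_G\subseteq V_G\times V_G$ (loops allowed). A homomorphism $\varphi:F\to G$ is a map $V_F\to V_G$ with $(\varphi(a),\varphi(b))\in E_G$ for all $(a,b)\in E_F$; $\mathsf{Hom}(F,G)$ is the set of these, $\hom(F,G)$ its size, $F\to G$ means $\hom(F,G)\ge 1$. For $F\to G$, $\mathsf{HDE}(F,G)=\sup\{c\in\mathbb R:\hom(F,T)\ge\hom(G,T)^c\text{ for all graphs }T\}$. For $A\subseteq V_G$, $G|_A$ is the induced subgraph on $A$; $\mathsf{CC}(H)$ is the number of connected components of the underlying undirected graph of $H$ (edges ignoring direction), with $\mathsf{CC}(G|_\emptyset)=0$. $\mathcal Q(G)$ is the set of functions $q:\wp(V_G)\to\mathbb R$ with $q(\emptyset)=0$, $q(A)\ge0$ for all $A$, and $\sum_{A\subseteq V_G} q(A)\,\mathsf{CC}(G|_A)=1$. *)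

(* Defs.v *)
From mathcomp Require Import all_boot.
From Stdlib Require Import Reals.
Set Implicit Arguments. Unset Strict Implicit. Unset Printing Implicit Defensive.

Record graph := Graph {
  vtx : finType;
  vtx_nonempty : (0 < #|vtx|)%N;
  edge : rel vtx
}.

Definition is_hom (F G : graph) (phi : vtx F -> vtx G) : bool :=
  [forall a, forall b, edge a b ==> edge (phi a) (phi b)].

Definition hom (F G : graph) : nat :=
  #|[set f : {ffun vtx F -> vtx G} | is_hom f]|.

Definition induced_und (G : graph) (A : {set vtx G}) : rel (vtx G) :=
  fun x y => [&& x \in A, y \in A & edge x y || edge y x].

Definition CC (G : graph) (A : {set vtx G}) : nat :=
  n_comp (induced_und A) A.

(* Real power convention for n^c with n a natural number:
   n^c = exp(c ln n) for n >= 1 and 0^c = 0. *)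
Definition rpow (n : nat) (c : R) : R :=
  if (n == 0)%N then 0%R else Rpower (INR n) c.

(* c belongs to the set whose supremum is HDE(F,G) *)
Definition HDE_admissible (F G : graph) (c : R) : Prop :=
  forall T : graph, (rpow (hom G T) c <= INR (hom F T))%R.

Definition inQ (G : graph) (q : {set vtx G} -> R) : Prop :=
  q set0 = 0%R /\ (forall A, (0 <= q A)%R) /\
  \big[Rplus/0%R]_(A : {set vtx G}) (q A * INR (CC A))%R = 1%R.

Definition qvalue (F G : graph) (q : {set vtx G} -> R) (phi : vtx F -> vtx G) : R :=
  \big[Rplus/0%R]_(A : {set vtx G}) (q A * INR (CC [set x | phi x \in A]))%R.

(* Main.v *)
Require Import Defs.
From mathcomp Require Import all_boot.
Lemma card_fam (aT : finType) (rT : finType) (F : aT -> pred rT) :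
  #|(family F : simpl_pred {ffun aT -> rT})| = \prod_(x : aT) #|F x|.
Proof. rewrite card_family foldrE big_map big_enum /=. done. Qed.
Lemma card_lt (k n : nat) : n <= k -> #|[pred i : 'I_k | val i < n]| = n.
Proof.
move=> nk. have inj : injective (widen_ord nk) by move=> a b /(congr1 val) /= /val_inj.
rewrite -{2}(card_ord n) -(card_imset _ inj).
apply: eq_card => i; rewrite inE /=. apply/idP/imsetP.
  move=> lt; exists (Ordinal lt) => //; exact: val_inj.
by case=> j _ ->; rewrite /= ltn_ord.
Qed.
Definition bnd (n : nat) (b : bool) := if b then n else 1.
Lemma card_cnt (X : finType) k n (r : pred X) : 0 < n <= k.+1 ->
 #|[set h : {ffun X -> 'I_k.+1} | [forall x, val (h x) < bnd n (r x)]]| = n ^ #|r|.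
Proof.
case/andP=> n0 nk.
rewrite (eq_card (B := (family (fun x => [pred i : 'I_k.+1 | val i < bnd n (r x)]) : simpl_pred _))).
  rewrite card_fam (eq_bigr (fun x => bnd n (r x))); last first.
    by move=> x _; apply: card_lt; rewrite /bnd; case: (r x).
  rewrite -big_mkcond /= prod_nat_const. done.
move=> h; rewrite inE; apply/forallP/familyP => H x; exact: H.
Qed.

Section Ind.
Variable H : graph.
Implicit Types A : {set vtx H}.
Lemma sym_ind A : connect_sym (induced_und A).
Proof. apply: sym_connect_sym => x y; rewrite /induced_und andbCA orbC. done. Qed.
Lemma closed_ind A : closed (induced_und A) A.
Proof. by move=> x y /and3P[-> ->]. Qed.
Lemma root_in A x : (root (induced_und A) x \in A) = (x \in A).
Proof. by rewrite -(closed_connect (closed_ind A) (connect_root _ x)). Qed.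
Lemma root_out A x : x \notin A -> root (induced_und A) x = x.
Proof.
move=> xA; have /connectP[[|y p] /= P ->] := connect_root (induced_und A) x => //.
by case/andP: P => /and3P[xA']; rewrite xA' in xA.
Qed.
Lemma roots_ind A x : (x \in A) && roots (induced_und A) x ->
   forall y, connect (induced_und A) y x -> root (induced_und A) y = x.
Proof. case/andP=> _ /eqP rx y /(rootP (sym_ind A)) ->; exact rx. Qed.
Definition rA A : pred (vtx H) := [pred x | (x \in A) && roots (induced_und A) x].
Lemma CC_rA A : CC A = #|rA A|.
Proof. by apply: eq_card => x; rewrite !inE andbC. Qed.
End Ind.
Arguments rA {H} A.
Arguments root_in {H}. Arguments root_out {H}. Arguments sym_ind {H}. Arguments closed_ind {H}. Arguments roots_ind {H}. Arguments CC_rA {H}.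

Section TGraph.
Variable G : graph.
Variable n : {set vtx G} -> nat.
Hypothesis hn : forall A, 0 < n A.
Definition mm := \max_(A : {set vtx G}) n A.
Lemma n_le A : n A <= mm.+1.
Proof. apply: leq_trans (leqnSn _); exact: (leq_bigmax_cond A (P := predT)). Qed.
Lemma bnd_le A b : 0 < bnd (n A) b <= mm.+1.
Proof. by rewrite /bnd; case: b; rewrite ?hn ?n_le. Qed.
Definition Tprop (p : vtx G * {ffun {set vtx G} -> 'I_mm.+1}) : bool :=
  [forall A, val (p.2 A) < bnd (n A) (p.1 \in A)].
Definition TV := {p | Tprop p}.
Lemma t0P v : Tprop (v, [ffun=> ord0]).
Proof. by apply/forallP=> A; rewrite ffunE; case/andP: (bnd_le A (v \in A)). Qed.
Definition t0 v : TV := exist Tprop _ (t0P v).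
Lemma TVne : 0 < #|{: TV}|.
Proof. by have /card_gt0P[v _] := vtx_nonempty G; apply/card_gt0P; exists (t0 v). Qed.
Definition eT (s t : TV) : bool := edge (val s).1 (val t).1 &&
  [forall A : {set vtx G}, ((val s).1 \in A) && ((val t).1 \in A) ==> ((val s).2 A == (val t).2 A)].
Definition TT : graph := @Graph TV TVne eT.

Lemma lowerT : \prod_(A : {set vtx G}) n A ^ CC A <= hom G TT.
Proof.
pose Fam A := [set h : {ffun vtx G -> 'I_mm.+1} | [forall x, val (h x) < bnd (n A) (rA A x)]].
pose D := [set g : {ffun {set vtx G} -> {ffun vtx G -> 'I_mm.+1}} | [forall A, g A \in Fam A]].
have cardD : #|D| = \prod_(A : {set vtx G}) n A ^ CC A.
  rewrite (eq_card (B := (family (fun A => mem (Fam A)) : simpl_pred _))); last first.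
    by move=> g; rewrite inE; apply/forallP/familyP.
  rewrite card_fam; apply: eq_bigr => A _.
  rewrite CC_rA -(@card_cnt _ mm (n A) (rA A)) ?hn ?n_le //.
pose lab (g : {ffun {set vtx G} -> {ffun vtx G -> 'I_mm.+1}}) (v : vtx G) : {ffun {set vtx G} -> 'I_mm.+1} := [ffun A => g A (root (induced_und A) v)].
pose Phi (g : {ffun {set vtx G} -> {ffun vtx G -> 'I_mm.+1}}) : {ffun vtx G -> TV} := [ffun v => insubd (t0 v) (v, lab g v)].
have PD : forall g, g \in D -> forall v, Tprop (v, lab g v).
  move=> g; rewrite inE => /forallP gD v; apply/forallP => A /=; rewrite ffunE.
  have := gD A; rewrite inE => /forallP /(_ (root (induced_und A) v)).
  by rewrite /rA inE root_in (roots_root (sym_ind A)) andbT.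
have valPhi : forall g v, g \in D -> val (Phi g v) = (v, lab g v).
  by move=> g v gD; rewrite ffunE val_insubd PD.
have homP : forall g, g \in D -> is_hom (Phi g : {ffun vtx G -> vtx TT}).
  move=> g gD; apply/forallP=> a; apply/forallP=> b; apply/implyP=> eab.
  rewrite /= /eT !valPhi //= eab /=; apply/forallP=> A; apply/implyP=> /andP[aA bA].
  rewrite !ffunE.
  have -> // : root (induced_und A) a = root (induced_und A) b.
  by apply/(rootP (sym_ind A))/connect1; rewrite /induced_und aA bA eab.
have inj : {in D &, injective Phi}.
  move=> g1 g2 D1 D2 E; apply/ffunP=> A; apply/ffunP=> x.
  case rx: (rA A x).
    have := congr1 (fun f : {ffun vtx G -> TV} => (val (f x)).2 A) E.
    rewrite /= !valPhi // !ffunE /=.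
    by have -> : root (induced_und A) x = x by case/andP: rx => _ /eqP.
  move: D1 D2; rewrite !inE => /forallP/(_ A) + /forallP/(_ A).
  rewrite !inE => /forallP/(_ x) + /forallP/(_ x).
  rewrite rx /bnd !ltnS !leqn0 => /eqP h1 /eqP h2; apply: val_inj; by rewrite h1 h2.
rewrite -cardD -(card_in_imset inj) /hom; apply: subset_leq_card; apply/subsetP => f.
by case/imsetP=> g gD ->; rewrite inE; exact: homP.
Qed.

Lemma upperT (F : graph) : hom F TT <=
  \sum_(phi : {ffun vtx F -> vtx G} | is_hom phi)
     \prod_(A : {set vtx G}) n A ^ CC [set x | phi x \in A].
Proof.
pose pr (psi : {ffun vtx F -> TV}) : {ffun vtx F -> vtx G} := [ffun a => (val (psi a)).1].
rewrite /hom -sum1_card (partition_big pr (fun phi => is_hom phi)); last first.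
  move=> psi; rewrite inE => /forallP hp; apply/forallP=> a; apply/forallP=> b.
  apply/implyP=> eab; have := forallP (hp a) b; rewrite eab /= /eT !ffunE.
  by case/andP.
apply: leq_sum => phi hphi; rewrite sum1dep_card.
pose B (A : {set vtx G}) := [set x | phi x \in A].
pose Fam (A : {set vtx G}) := [set h : {ffun vtx F -> 'I_mm.+1} |
  [forall a, forall b, induced_und (B A) a b ==> (h a == h b)] &&
  [forall a, val (h a) < bnd (n A) (a \in B A)]].
pose D := [set g : {ffun {set vtx G} -> {ffun vtx F -> 'I_mm.+1}} | [forall A, g A \in Fam A]].
pose Psi (psi : {ffun vtx F -> TV}) : {ffun {set vtx G} -> {ffun vtx F -> 'I_mm.+1}} :=
  [ffun A => [ffun a => (val (psi a)).2 A]].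
set S := [set _ | _].
have inj : {in S &, injective Psi}.
  move=> p1 p2; rewrite !inE => /andP[_ /eqP e1] /andP[_ /eqP e2] E.
  apply/ffunP=> a; apply: val_inj.
  have := congr1 (fun f : {ffun vtx F -> vtx G} => f a) e1; have := congr1 (fun f : {ffun vtx F -> vtx G} => f a) e2; rewrite !ffunE.
  have E3 := fun A => congr1 (fun f : {ffun {set vtx G} -> {ffun vtx F -> 'I_mm.+1}} => f A a) E.
  simpl in E3. rewrite /Psi in E3. move: E3.
  move=> E3' h2 h1.
  have E4 : forall A, (val (p1 a)).2 A = (val (p2 a)).2 A.
    by move=> A; have := E3' A; rewrite !ffunE.
  move: E4 h1 h2; case: (val (p1 a)) => v1 l1; case: (val (p2 a)) => v2 l2 /= E4 -> ->.
  by congr pair; apply/ffunP=> A; apply: E4.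
have imD : forall psi, psi \in S -> Psi psi \in D.
  move=> psi; rewrite inE => /andP[]; rewrite inE => hp /eqP epr.
  have fst : forall a, (val (psi a)).1 = phi a by move=> a; rewrite -epr ffunE.
  rewrite inE; apply/forallP=> A; rewrite inE ffunE; apply/andP; split.
    apply/forallP=> a; apply/forallP=> b; apply/implyP=> /and3P[aB bB eab].
    rewrite !ffunE; rewrite /B !inE in aB bB.
    case/orP: eab => e.
      have := forallP (forallP hp a) b; rewrite e /= /eT => /andP[_ /forallP/(_ A)].
      by rewrite !fst aB bB.
    have := forallP (forallP hp b) a; rewrite e /= /eT => /andP[_ /forallP/(_ A)].
    by rewrite !fst aB bB /= eq_sym.
  apply/forallP=> a; rewrite ffunE; have := forallP (valP (psi a)) A.
  by rewrite fst /B inE.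
rewrite -(card_in_imset inj); apply: leq_trans (_ : #|D| <= _).
  by apply: subset_leq_card; apply/subsetP=> g /imsetP[psi pS ->]; apply: imD.
rewrite (eq_card (B := (family (fun A => mem (Fam A)) : simpl_pred _))); last first.
  by move=> g; rewrite inE; apply/forallP/familyP.
rewrite card_fam; apply: leq_prod => A _.
rewrite CC_rA -(@card_cnt _ mm (n A)) ?hn ?n_le //.
pose R := rA (B A).
pose chi (h : {ffun vtx F -> 'I_mm.+1}) : {ffun vtx F -> 'I_mm.+1} :=
  [ffun a => if R a then h a else ord0].
have key : forall h, h \in Fam A -> forall a, h (root (induced_und (B A)) a) = h a.
  move=> h; rewrite inE => /andP[/forallP hc _] a.
  have cl : closed (induced_und (B A)) [pred z | h z == h a].
    move=> x y exy; rewrite !inE; have := forallP (hc x) y; rewrite exy => /eqP -> //.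
  have := closed_connect cl (connect_root _ a); rewrite !inE eqxx => /esym/eqP. done.
have Rroot : forall a, a \in B A -> R (root (induced_und (B A)) a).
  by move=> a aB; rewrite /R /rA inE root_in aB (roots_root (sym_ind _)).
have injc : {in Fam A &, injective chi}.
  move=> h1 h2 F1 F2 E; apply/ffunP=> a; case aB: (a \in B A).
    rewrite -(key h1 F1 a) -(key h2 F2 a).
    have := congr1 (fun f : {ffun vtx F -> 'I_mm.+1} => f (root (induced_und (B A)) a)) E.
    by rewrite !ffunE Rroot.
  move: F1 F2; rewrite !inE => /andP[_ /forallP H1] /andP[_ /forallP H2].
  move: (H1 a) (H2 a); rewrite aB /bnd !ltnS !leqn0 => /eqP e1 /eqP e2.
  by apply: val_inj; rewrite e1 e2.
rewrite -(card_in_imset injc); apply: subset_leq_card; apply/subsetP=> g /imsetP[h hF ->].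
rewrite inE; apply/forallP=> a; rewrite ffunE.
case Ra: (R a); last by case/andP: (bnd_le A (R a)).
move: hF; rewrite inE => /andP[_ /forallP/(_ a)].
move: Ra; rewrite /R /rA inE; case: (a \in B A) => //= ->; exact.
Qed.
End TGraph.
From Stdlib Require Import Reals.
From Stdlib Require Import Lra.

Lemma INR_expn m k : INR (expn m k) = (INR m ^ k)%R.
Proof. elim: k => [|k IH] /=; first by []. rewrite expnS mulnE mult_INR IH. simpl. ring. Qed.
Lemma INR_muln a b : INR (muln a b) = (INR a * INR b)%R.
Proof. by rewrite mulnE mult_INR. Qed.

Open Scope R_scope.
Lemma ln_le' x y : 0 < x -> x <= y -> ln x <= ln y.
Proof. move=> x0 [xy|->]; [left; exact: ln_increasing | right; done]. Qed.
Lemma exp_ge1 t : 0 <= t -> 1 <= exp t.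
Proof. rewrite -exp_0 => -[t0|<-]; [left; exact: exp_increasing | right; done]. Qed.

Section Sums.
Variable I : Type.
Implicit Types (r : seq I) (P : pred I) (f g h : I -> R).
Lemma sumR_le r P f g : (forall i, P i -> f i <= g i) ->
  \big[Rplus/0]_(i <- r | P i) f i <= \big[Rplus/0]_(i <- r | P i) g i.
Proof. move=> H; elim: r => [|i r IH]; rewrite ?big_nil ?big_cons; first lra.
case Pi: (P i) => //; have := H i Pi; lra. Qed.
Lemma sumR_scal r P c f :
  \big[Rplus/0]_(i <- r | P i) (c * f i) = c * \big[Rplus/0]_(i <- r | P i) f i.
Proof. elim: r => [|i r IH]; rewrite ?big_nil ?big_cons; first ring.
case: (P i) => //; rewrite IH; ring. Qed.
Lemma sumR_add r P f g :
  \big[Rplus/0]_(i <- r | P i) (f i + g i) =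
  \big[Rplus/0]_(i <- r | P i) f i + \big[Rplus/0]_(i <- r | P i) g i.
Proof. elim: r => [|i r IH]; rewrite ?big_nil ?big_cons; first ring.
case: (P i) => //; rewrite IH; ring. Qed.
Lemma sumR_ge0 r P f : (forall i, P i -> 0 <= f i) -> 0 <= \big[Rplus/0]_(i <- r | P i) f i.
Proof. move=> H; elim: r => [|i r IH]; rewrite ?big_nil ?big_cons; first lra.
case Pi: (P i) => //; have := H i Pi; lra. Qed.
Lemma ln_prod r P (f : I -> nat) : (forall i, P i -> leq 1 (f i)) ->
  0 < INR (\prod_(i <- r | P i) f i) /\
  ln (INR (\prod_(i <- r | P i) f i)) = \big[Rplus/0]_(i <- r | P i) ln (INR (f i)).
Proof. move=> H; elim: r => [|i r [IH1 IH2]]; rewrite ?big_nil ?big_cons.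
  by rewrite /= ln_1; split; [lra|].
case Pi: (P i) => //; have fi : 0 < INR (f i) by apply: lt_0_INR; apply/ltP; exact: H.
rewrite INR_muln ln_mult // IH2; split => //; exact: Rmult_lt_0_compat.
Qed.
End Sums.

Lemma exists_max (T : finType) (P : pred T) (f : T -> R) :
  (exists x, P x) -> exists x, P x /\ forall y, P y -> f y <= f x.
Proof.
move=> [x0 Px0].
have: forall s : seq T, has P s -> exists x, P x /\ forall y, y \in s -> P y -> f y <= f x.
  elim => [//|a s IH] /=. case Pa: (P a) => /=.
    case Hs: (has P s).
      case: (IH Hs) => x [Px Hx]; case: (Rle_dec (f a) (f x)) => fax.
        exists x; split => // y; rewrite in_cons => /orP[/eqP -> //|]; exact: Hx.
      exists a; split => // y; rewrite in_cons => /orP[/eqP -> |ys Py]; first lra.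
      have := Hx y ys Py; lra.
    move=> _; exists a; split => // y; rewrite in_cons => /orP[/eqP -> |ys Py]; first lra.
    by move: Hs; have -> // : has P s by apply/hasP; exists y.
  move=> Hs; case: (IH Hs) => x [Px Hx]; exists x; split => // y.
  rewrite in_cons => /orP[/eqP -> |]; [by rewrite Pa | exact: Hx].
move=> /(_ (enum T)) []; first by apply/hasP; exists x0; rewrite ?mem_enum.
by move=> x [Px Hx]; exists x; split => // y; apply: Hx; rewrite mem_enum.
Qed.

Lemma main_aux (F G : graph) (hFG : leq 1 (hom F G)) (q : {set vtx G} -> R)
  (hq : inQ q) (c : R) (adm : HDE_admissible F G c) :
  exists phi : {ffun vtx F -> vtx G}, is_hom phi /\ c <= qvalue q phi.
Proof.
case: hq => [q0 [qnn qsum]].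
have [phi [hphi Mphi]] : exists phi : {ffun vtx F -> vtx G}, is_hom phi /\
    forall psi : {ffun vtx F -> vtx G}, is_hom psi -> qvalue q psi <= qvalue q phi.
  apply: exists_max; move: hFG; rewrite /hom => /card_gt0P [x]; rewrite inE => hx.
  by exists x.
exists phi; split => //.
set M := qvalue q phi.
destruct (Rle_or_lt c M) as [|cM]; first done. exfalso.
have M0 : 0 <= M.
  by apply: sumR_ge0 => A _; apply: Rmult_le_pos; [apply: qnn | apply: pos_INR].
pose KF := \big[Rplus/0]_(A : {set vtx G}) (ln 2 * INR #|vtx F|).
pose C0 := ln (INR (hom F G)) + KF.
have ln2 : 0 <= ln 2 by rewrite -ln_1; apply: ln_le'; lra.
have hFG1 : 1 <= INR (hom F G) by apply: (le_INR 1); apply/leP.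
have C00 : 0 <= C0.
  have : 0 <= ln (INR (hom F G)) by rewrite -ln_1; apply: ln_le'; lra.
  have : 0 <= KF by apply: sumR_ge0 => A _; apply: Rmult_le_pos => //; apply: pos_INR.
  rewrite /C0; lra.
pose L := C0 / (c - M) + 1.
have L0 : 0 <= L.
  have : 0 <= C0 / (c - M).
    by rewrite /Rdiv; apply: Rmult_le_pos => //; left; apply: Rinv_0_lt_compat; lra.
  rewrite /L; lra.
pose x A := exp (q A * L).
have x1 : forall A, 1 <= x A by move=> A; apply: exp_ge1; apply: Rmult_le_pos.
pose n A := Z.to_nat (up (x A)).
have nE : forall A, INR (n A) = IZR (up (x A)).
  move=> A; rewrite INR_IZR_INZ Znat.Z2Nat.id //; apply: le_IZR.
  have [h1 _] := archimed (x A); have := x1 A; simpl; lra.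
have nlo : forall A, x A < INR (n A).
  by move=> A; rewrite nE; have [h1 _] := archimed (x A); lra.
have nhi : forall A, INR (n A) <= 2 * x A.
  by move=> A; rewrite nE; have [_ h2] := archimed (x A); have := x1 A; lra.
have npos : forall A, (leq 1 (n A)).
  move=> A; apply/ltP; apply: INR_lt; have := nlo A; have := x1 A; simpl; lra.
have lnlo : forall A, q A * L <= ln (INR (n A)).
  move=> A; rewrite -[q A * L]ln_exp; apply: ln_le'; first exact: exp_pos.
  by left; apply: nlo.
have lnhi : forall A, ln (INR (n A)) <= ln 2 + q A * L.
  move=> A; rewrite -[q A * L]ln_exp -ln_mult; try lra; last exact: exp_pos.
  apply: ln_le'; last exact: nhi; have := nlo A; have := x1 A; lra.
have lnpp : forall kk : {set vtx G} -> nat,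
    0 < INR (\prod_(A : {set vtx G}) expn (n A) (kk A)) /\
    ln (INR (\prod_(A : {set vtx G}) expn (n A) (kk A))) =
    \big[Rplus/0]_(A : {set vtx G}) (INR (kk A) * ln (INR (n A))).
  move=> kk; case: (@ln_prod _ (index_enum {set vtx G}) xpredT (fun A => expn (n A) (kk A))).
    by move=> A _; rewrite expn_gt0 npos.
  move=> h1 h2; split; first exact: h1.
  rewrite h2; apply: eq_bigr => A _; rewrite INR_expn ln_pow //.
  apply: lt_0_INR; apply/ltP; exact: npos.
pose T := @TT G n npos.
have hG := @lowerT G n npos.
have [PG0 PGln] := lnpp (fun A => CC A).
have hGT := le_INR _ _ (elimT leP hG).
have lnG : L <= ln (INR (hom G T)).
  apply: (Rle_trans _ _ _ _ (ln_le' _ _ PG0 hGT)). rewrite PGln.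
  have -> : L = L * \big[Rplus/0]_(A : {set vtx G}) (q A * INR (CC A)) by rewrite qsum; ring.
  rewrite -sumR_scal; apply: sumR_le => A _; have := lnlo A; have := pos_INR (CC A).
  have := qnn A; nra.
pose Pf (f : {ffun vtx F -> vtx G}) := \prod_(A : {set vtx G}) expn (n A) (CC [set x | f x \in A]).
have [phi0 [hphi0 Mphi0]] : exists f : {ffun vtx F -> vtx G}, is_hom f /\
   forall g : {ffun vtx F -> vtx G}, is_hom g -> INR (Pf g) <= INR (Pf f).
  by apply: exists_max; exists phi.
have hF := @upperT G n npos F.
have hF2 : leq (hom F T) (muln (hom F G) (Pf phi0)).
  apply: leq_trans hF _.
  apply: leq_trans (_ : leq (\sum_(f : {ffun vtx F -> vtx G} | is_hom f) Pf phi0) _).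
    by apply: leq_sum => f hf; apply/leP; apply: INR_le; exact: Mphi0.
  have -> : \sum_(f : {ffun vtx F -> vtx G} | is_hom f) Pf phi0 =
            \sum_(f : {ffun vtx F -> vtx G} | is_hom f) muln 1 (Pf phi0).
    by apply: eq_bigr => f _; rewrite mul1n.
  by rewrite -big_distrl /= sum1dep_card /hom.
have hFT := le_INR _ _ (elimT leP hF2); rewrite INR_muln in hFT.
have [P0 Pln] := lnpp (fun A => CC [set x | phi0 x \in A]).
have lnP : ln (INR (Pf phi0)) <= KF + L * M.
  rewrite Pln.
  apply: Rle_trans (_ : _ <= \big[Rplus/0]_(A : {set vtx G}) (ln 2 * INR #|vtx F| +
       L * (q A * INR (CC [set x | phi0 x \in A])))) _.
    apply: sumR_le => A _; have := lnhi A; have := lnlo A.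
    have := pos_INR (CC [set x | phi0 x \in A]).
    have : INR (CC [set x | phi0 x \in A]) <= INR #|vtx F|.
      by apply: le_INR; apply/leP; exact: max_card.
    have := qnn A; nra.
  rewrite sumR_add [X in _ + X <= _]sumR_scal.
  have := Mphi phi0 hphi0; rewrite /M /qvalue => h; rewrite /M /qvalue /KF; apply: Rplus_le_compat_l; apply: Rmult_le_compat_l => //.
have := adm T; rewrite /rpow; case: eqP => [h0|_].
  move=> _; move: hGT; rewrite -/T h0 /= => hGT; exact: (Rlt_not_le _ _ PG0 hGT).
rewrite /Rpower => hexp.
have hFT0 : 0 < INR (hom F T) by apply: Rlt_le_trans hexp; exact: exp_pos.
have l1 : c * ln (INR (hom G T)) <= ln (INR (hom F T)).
  by rewrite -[c * _]ln_exp; apply: ln_le' => //; exact: exp_pos.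
have l2 : ln (INR (hom F T)) <= ln (INR (hom F G)) + ln (INR (Pf phi0)).
  rewrite -ln_mult; [apply: ln_le' => // | lra | exact: P0].
have eqL : (c - M) * L = C0 + (c - M) by rewrite /L; field; lra.
have cpos : 0 < c by lra.
rewrite /C0 in eqL; nra.
Qed.

Close Scope R_scope.

(* HDE(F,G) <= min_q max_phi qvalue, unfolded: every admissible exponent c is
   bounded, for every q in Q(G), by qvalue at some homomorphism phi. *)
Theorem theorem3p2 (F G : graph) (hFG : (0 < hom F G)%N) :
  forall q : {set vtx G} -> R, inQ q ->
  forall c : R, HDE_admissible F G c ->
  exists phi : vtx F -> vtx G, is_hom phi /\ (c <= qvalue q phi)%R.
Proof.
move=> q hq c adm; case: (@main_aux F G hFG q hq c adm) => phi [h1 h2].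
by exists phi; split.
Qed.
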